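(* Let $B\in\mathbb{C}^{n\times n}$ be nonzero of rank $r$ with Hartwig–Spindelböck decomposition $B=U\begin{bmatrix}\Sigma K&\Sigma L\\0&0\end{bmatrix}U^*$. Then $B$ is bi-dagger, i.e. $(B^2)^\dagger=(B^\dagger)^2$, if and only if $(\Sigma K\Sigma)^\dagger=\Sigma^{-1}K^*\Sigma^{-1}$.
   Context: $M^*$ is the conjugate transpose, $M^\dagger$ the Moore–Penrose inverse. Hartwig–Spindelböck decomposition: every $B\in\mathbb{C}^{n\times n}$ of rank $r>0$ can be written $B=U\begin{bmatrix}\Sigma K&\Sigma L\\0&0\end{bmatrix}U^*$ with $U$ unitary, $\Sigma\in\mathbb{C}^{r\times r}$ the positive diagonal matrix of nonzero singular values of $B$, $K\in\mathbb{C}^{r\times r}$, $L\in\mathbb{C}^{r\times(n-r)}$ with $KK^*+LL^*=I_r$. *)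

(* Defs.v *)
From HB Require Import structures.
From mathcomp Require Import all_boot all_order all_algebra.
From Stdlib Require Import ClassicalEpsilon.
Set Implicit Arguments. Unset Strict Implicit. Unset Printing Implicit Defensive.
Import Order.TTheory GRing.Theory Num.Theory.
Local Open Scope ring_scope.

Definition ctmx (C : numClosedFieldType) (m n : nat) (M : 'M[C]_(m, n))
  : 'M[C]_(n, m) := (map_mx Num.conj M)^T.

Definition is_mpinv (C : numClosedFieldType) (m n : nat)
  (A : 'M[C]_(m, n)) (X : 'M[C]_(n, m)) : Prop :=
  [/\ A *m X *m A = A, X *m A *m X = X,
      ctmx (A *m X) = A *m X & ctmx (X *m A) = X *m A].

(* The Moore-Penrose inverse A^dagger: the (unique, always existing)
   matrix satisfying the Penrose equations, selected by choice. *)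
Definition mpinv (C : numClosedFieldType) (m n : nat) (A : 'M[C]_(m, n))
  : 'M[C]_(n, m) := epsilon (inhabits 0) (fun X => is_mpinv A X).

Definition unitary_mx (C : numClosedFieldType) (n : nat) (U : 'M[C]_n) : Prop :=
  U *m ctmx U = 1%:M.

Definition bi_dagger (C : numClosedFieldType) (n : nat) (B : 'M[C]_n) : Prop :=
  mpinv (B *m B) = mpinv B *m mpinv B.

(* Main.v *)
Require Import Defs.
From HB Require Import structures.
From mathcomp Require Import all_boot all_order all_algebra.
From Stdlib Require Import ClassicalEpsilon.
Import Order.TTheory GRing.Theory Num.Theory.
Local Open Scope ring_scope.
Set Implicit Arguments. Unset Strict Implicit. Unset Printing Implicit Defensive.

Section CT.
Variable C : numClosedFieldType.

Lemma ctmxK m n (A : 'M[C]_(m,n)) : ctmx (ctmx A) = A.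
Proof. apply/matrixP=> i j; rewrite !mxE conjCK. by []. Qed.

Lemma ctmxM m n p (A : 'M[C]_(m,n)) (B : 'M[C]_(n,p)) :
  ctmx (A *m B) = ctmx B *m ctmx A.
Proof. by rewrite /ctmx map_mxM trmx_mul. Qed.

Lemma ctmx1 n : ctmx (1%:M : 'M[C]_n) = 1%:M.
Proof. by rewrite /ctmx map_mx1 trmx1. Qed.

Lemma ctmx0 m n : ctmx (0 : 'M[C]_(m,n)) = 0.
Proof. by rewrite /ctmx map_mx0 trmx0. Qed.

Lemma ctmxV n (A : 'M[C]_n) : ctmx (invmx A) = invmx (ctmx A).
Proof. by rewrite /ctmx map_invmx trmx_inv. Qed.

Lemma ctmx_row m n1 n2 (A : 'M[C]_(m,n1)) (B : 'M[C]_(m,n2)) :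
  ctmx (row_mx A B) = col_mx (ctmx A) (ctmx B).
Proof. by rewrite /ctmx map_row_mx tr_row_mx. Qed.

Lemma ctmx_col m1 m2 n (A : 'M[C]_(m1,n)) (B : 'M[C]_(m2,n)) :
  ctmx (col_mx A B) = row_mx (ctmx A) (ctmx B).
Proof. by rewrite /ctmx map_col_mx tr_col_mx. Qed.

Lemma gram0 m n (A : 'M[C]_(m,n)) : A *m ctmx A = 0 -> A = 0.
Proof.
move=> H; apply/matrixP=> i j; rewrite mxE.
have := congr1 (fun M : 'M[C]_m => M i i) H; rewrite !mxE => /eqP.
under eq_bigr => k _ do rewrite !mxE -normCK.
rewrite psumr_eq0 => [/allP/(_ j (mem_index_enum _))|k _]; last exact: exprn_ge0.
by rewrite /= sqrf_eq0 normr_eq0 => /eqP.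
Qed.

Lemma gram_unit m n (G : 'M[C]_(m,n)) : row_free G -> G *m ctmx G \in unitmx.
Proof.
move=> fG; rewrite -row_free_unit -kermx_eq0; apply/eqP.
set Kx := kermx _.
have H0 : Kx *m G *m ctmx G = 0 by rewrite -mulmxA mulmx_ker.
have : Kx *m G = 0.
  apply: gram0; rewrite ctmxM !mulmxA H0 mul0mx //.
by move/eqP; rewrite mulmx_free_eq0 // => /eqP.
Qed.

Lemma mpinv_uniq m n (A : 'M[C]_(m,n)) X Y :
  is_mpinv A X -> is_mpinv A Y -> X = Y.
Proof.
case=> [h1 h2 h3 h4] [k1 k2 k3 k4].
have eX : X = X *m A *m Y.
  have e1 : X = X *m ctmx (A *m X) by rewrite h3 mulmxA h2.
  rewrite {1}e1 ctmxM -{1}k1 (ctmxM (A *m Y)) k3 (mulmxA (ctmx X)) -ctmxM h3 !mulmxA h2 //.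
have eY : Y = X *m A *m Y.
  have e1 : Y = ctmx (Y *m A) *m Y by rewrite k4 k2.
  rewrite {1}e1 ctmxM -{1}h1 -(mulmxA A X A) ctmxM h4 -(mulmxA _ (ctmx A)) -ctmxM k4 -(mulmxA _ (Y *m A)) k2 //.
by rewrite eX -eY.
Qed.

Lemma mpinvE m n (A : 'M[C]_(m,n)) X : is_mpinv A X -> mpinv A = X.
Proof.
move=> hX; apply: (mpinv_uniq _ hX); rewrite /mpinv.
by apply: epsilon_spec; exists X.
Qed.

Lemma rank_ctmx m n (A : 'M[C]_(m,n)) : \rank (ctmx A) = \rank A.
Proof. by rewrite /ctmx mxrank_tr mxrank_map. Qed.

Lemma herm_inv n (M : 'M[C]_n) : ctmx M = M -> ctmx (invmx M) = invmx M.
Proof. by move=> h; rewrite ctmxV h. Qed.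

Lemma mpinv_fr m n k (F : 'M[C]_(m,k)) (G : 'M[C]_(k,n)) :
  G *m ctmx G \in unitmx -> ctmx F *m F \in unitmx ->
  exists X, is_mpinv (F *m G) X.
Proof.
move=> uG uF.
set P := invmx (G *m ctmx G); set Q := invmx (ctmx F *m F).
have hP : ctmx P = P by apply: herm_inv; rewrite ctmxM ctmxK.
have hQ : ctmx Q = Q by apply: herm_inv; rewrite ctmxM ctmxK.
have P1 : G *m ctmx G *m P = 1%:M by rewrite mulmxV.
have Q1 : Q *m ctmx F *m F = 1%:M by rewrite -mulmxA mulVmx.
exists (ctmx G *m P *m Q *m ctmx F).
have eAX : F *m G *m (ctmx G *m P *m Q *m ctmx F) = F *m Q *m ctmx F.
  by rewrite !mulmxA -(mulmxA F G) -(mulmxA F (G *m _)) P1 mulmx1.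
have eXA : (ctmx G *m P *m Q *m ctmx F) *m (F *m G) = ctmx G *m P *m G.
  by rewrite !mulmxA -(mulmxA _ Q (ctmx F)) -(mulmxA _ (Q *m _) F) Q1 mulmx1.
split.
- by rewrite eAX !mulmxA -(mulmxA _ Q (ctmx F)) -(mulmxA _ (Q *m _) F) Q1 mulmx1.
- by rewrite eXA !mulmxA -(mulmxA _ G (ctmx G)) -(mulmxA _ (G *m _) P) P1 mulmx1.
- by rewrite eAX !ctmxM ctmxK hQ mulmxA.
- by rewrite eXA !ctmxM ctmxK hP mulmxA.
Qed.

Lemma mpinv_exists m n (A : 'M[C]_(m,n)) : exists X, is_mpinv A X.
Proof.
rewrite -(mulmx_base A); apply: mpinv_fr.
  by apply: gram_unit; apply: row_base_free.
have := @gram_unit _ _ (ctmx (col_base A)); rewrite ctmxK; apply.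
by rewrite /row_free rank_ctmx; apply: col_base_full.
Qed.

Lemma mpinvP m n (A : 'M[C]_(m,n)) : is_mpinv A (mpinv A).
Proof. by apply: epsilon_spec; apply: mpinv_exists. Qed.

End CT.

Lemma mp_conj (C : numClosedFieldType) n k (F : 'M[C]_(n,k)) (G : 'M[C]_(k,n)) T X :
  ctmx F *m F = 1%:M -> G *m ctmx G = 1%:M -> is_mpinv T X ->
  is_mpinv (F *m T *m G) (ctmx G *m X *m ctmx F).
Proof.
move=> hF hG [h1 h2 h3 h4].
have eAX : F *m T *m G *m (ctmx G *m X *m ctmx F) = F *m (T *m X) *m ctmx F.
  by rewrite !mulmxA -(mulmxA _ G) hG mulmx1.
have eXA : ctmx G *m X *m ctmx F *m (F *m T *m G) = ctmx G *m (X *m T) *m G.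
  by rewrite !mulmxA -(mulmxA _ (ctmx F)) hF mulmx1.
split.
- by rewrite eAX !mulmxA -(mulmxA _ (ctmx F)) hF mulmx1 -(mulmxA F T X) -(mulmxA F) h1.
- by rewrite eXA !mulmxA -(mulmxA _ G) hG mulmx1 -(mulmxA (ctmx G) X T) -(mulmxA (ctmx G)) h2.
- by rewrite eAX ctmxM ctmxK ctmxM h3 mulmxA.
- by rewrite eXA ctmxM ctmxM ctmxK h4 mulmxA.
Qed.

Theorem corollary5p4 (C : numClosedFieldType) (r m : nat)
  (B : 'M[C]_(r + m)) (U : 'M[C]_(r + m)) (s : 'rV[C]_r)
  (K : 'M[C]_r) (L : 'M[C]_(r, m)) :
  (0 < r)%N ->
  B != 0 ->
  \rank B = r ->
  unitary_mx U ->
  (forall i, 0 < s 0 i) ->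
  K *m ctmx K + L *m ctmx L = 1%:M ->
  B = U *m block_mx (diag_mx s *m K) (diag_mx s *m L) 0 0 *m ctmx U ->
  bi_dagger B <->
  mpinv (diag_mx s *m K *m diag_mx s)
    = invmx (diag_mx s) *m ctmx K *m invmx (diag_mx s).
Proof.
move=> _ _ _ hU hs hKL hB.
set S := diag_mx s.
set E : 'M[C]_(r + m, r) := col_mx 1%:M 0.
set W : 'M[C]_(r, r + m) := row_mx K L.
set F := U *m E; set G := W *m ctmx U.
have hU' : ctmx U *m U = 1%:M by apply: mulmx1C.
have hE : ctmx E *m E = 1%:M.
  by rewrite /E ctmx_col ctmx1 ctmx0 mul_row_col mul0mx addr0 mulmx1.
have hW : W *m ctmx W = 1%:M by rewrite /W ctmx_row mul_row_col.
have hFF : ctmx F *m F = 1%:M.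
  by rewrite /F ctmxM mulmxA -(mulmxA _ (ctmx U)) hU' mulmx1 hE.
have hGG : G *m ctmx G = 1%:M.
  by rewrite /G ctmxM ctmxK mulmxA -(mulmxA W) hU' mulmx1 hW.
have hGF : G *m F = K.
  rewrite /G /F mulmxA -(mulmxA W) hU' mulmx1 /W /E.
  by rewrite mul_row_col mulmx1 mulmx0 addr0.
have eB : B = F *m S *m G.
  rewrite hB /F /G !mulmxA; congr (_ *m _).
  rewrite -!mulmxA; congr (_ *m _).
  rewrite /E /W block_mxEv mul_col_mx mul1mx mul0mx.
  by rewrite mul_mx_row row_mx0.
have uS : S \in unitmx.
  rewrite unitmxE det_diag unitfE; apply/prodf_neq0 => i _.
  by rewrite gt_eqF.
have hS : ctmx S = S.
  apply/matrixP=> i j; rewrite !mxE eq_sym.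
  case: eqVneq => [->|_]; last by rewrite !mulr0n conjC0.
  by rewrite !mulr1n conj_Creal // gtr0_real.
have mpS : is_mpinv S (invmx S).
  split.
  - by rewrite mulmxV // mul1mx.
  - by rewrite mulVmx // mul1mx.
  - by rewrite mulmxV // ctmx1.
  - by rewrite mulVmx // ctmx1.
have eBd : mpinv B = ctmx G *m invmx S *m ctmx F.
  by apply: mpinvE; rewrite eB; apply: mp_conj.
set T := S *m K *m S.
have eB2 : B *m B = F *m T *m G.
  have e : F *m S *m G *m (F *m S *m G) = F *m S *m (G *m F) *m S *m G.
    by rewrite !mulmxA.
  by rewrite eB e hGF /T !mulmxA.
have eB2d : mpinv (B *m B) = ctmx G *m mpinv T *m ctmx F.
  by apply: mpinvE; rewrite eB2; apply: mp_conj => //; apply: mpinvP.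
have eBdd : mpinv B *m mpinv B
    = ctmx G *m (invmx S *m ctmx K *m invmx S) *m ctmx F.
  have e : ctmx G *m invmx S *m ctmx F *m (ctmx G *m invmx S *m ctmx F)
     = ctmx G *m invmx S *m (ctmx F *m ctmx G) *m invmx S *m ctmx F.
    by rewrite !mulmxA.
  by rewrite eBd e -ctmxM hGF !mulmxA.
clearbody F G.
have canc : forall X Y : 'M[C]_r,
    ctmx G *m X *m ctmx F = ctmx G *m Y *m ctmx F -> X = Y.
  move=> X Y h.
  have := congr1 (fun M => G *m M *m F) h.
  by rewrite /= !mulmxA hGG !mul1mx -!mulmxA hFF !mulmx1.
rewrite /bi_dagger eB2d eBdd; split; first exact: canc.
by move=> ->.
Qed.
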